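(* Let $\boldsymbol{x}=[i,v]^{\intercal}$ be any solution of the switched system, and let $\boldsymbol{x}_p=[i_p,v_p]^{\intercal}$ be its unique $T$-periodic solution. Then the averages $\langle v\rangle$ and $\langle i\rangle$ exist, and $$\langle v\rangle=\tfrac12\bigl(v_p(0)+v_p(T/2)\bigr)=\frac{V_{dc}}{2},$$ $$\langle i\rangle=\frac{2C}{T}\bigl(V_{dc}-2v_p(0)\bigr),$$ and $$\Bigl|\langle i\rangle-\frac{V_{dc}}{2R}\Bigr|\le\frac{T}{2RC}\max_{t\in[0,T/2]}|i_p(t)| .$$
   Context: Let $R,L,C,V_{dc},T>0$. Let $\boldsymbol{x}(t)=[i(t),v(t)]^{\intercal}$. Define $$A_1=\begin{bmatrix}-\frac RL & -\frac1L\\ \frac1C & 0\end{bmatrix},\quad A_2=\begin{bmatrix}-\frac RL & \frac1L\\ -\frac1C & 0\end{bmatrix},\quad \boldsymbol{b}_1=\begin{bmatrix}\frac{V_{dc}}L\\ 0\end{bmatrix}.$$ The switched system on $t\ge0$ is: $\boldsymbol{x}'=A_1\boldsymbol{x}+\boldsymbol{b}_1$ on each interval $[(k-1)T,(k-1)T+\frac T2]$ and $\boldsymbol{x}'=A_2\boldsymbol{x}$ on each interval $[(k-1)T+\frac T2,kT]$, $k=1,2,\dots$; solutions are continuous functions on $[0,\infty)$. The system has a unique $T$-periodic solution $\boldsymbol{x}_p$, with $\boldsymbol{x}_p(0)=\left(I-\mathrm{e}^{\frac{T}{2}A_2}\mathrm{e}^{\frac{T}{2}A_1}\right)^{-1}\mathrm{e}^{\frac{T}{2}A_2}A_1^{-1}\left(\mathrm{e}^{\frac{T}{2}A_1}-I\right)\boldsymbol{b}_1$.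 For a function $f$ on $[0,\infty)$, its average is $\langle f\rangle=\lim_{\tau\to\infty}\frac1\tau\int_0^\tau f(t)\,dt$. *)

(* Defs.v *)
From Stdlib Require Import Reals Lra.
Open Scope R_scope.

Definition cont_nonneg (f : R -> R) : Prop :=
  forall t, 0 <= t -> limit1_in f (fun s => 0 <= s) (f t) t.

(* Solution of the switched system, x = [i, v]^T, on [0, +oo):
   continuous on [0,+oo); on the interior of each interval
   [(k-1)T, (k-1)T + T/2] it solves x' = A1 x + b1, and on the interior of
   each [(k-1)T + T/2, kT] it solves x' = A2 x.  (k = 1,2,... is written
   via m = k-1 : nat.) *)
Definition is_solution (Rr L C Vdc T : R) (i v : R -> R) : Prop :=
  cont_nonneg i /\ cont_nonneg v /\
  (forall (m : nat) (t : R), INR m * T < t < INR m * T + T / 2 ->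
     derivable_pt_lim i t (- (Rr / L) * i t - (1 / L) * v t + Vdc / L) /\
     derivable_pt_lim v t ((1 / C) * i t)) /\
  (forall (m : nat) (t : R), INR m * T + T / 2 < t < INR m * T + T ->
     derivable_pt_lim i t (- (Rr / L) * i t + (1 / L) * v t) /\
     derivable_pt_lim v t (- (1 / C) * i t)).

Definition is_periodic_solution (Rr L C Vdc T : R) (ip vp : R -> R) : Prop :=
  is_solution Rr L C Vdc T ip vp /\
  (forall t, 0 <= t -> ip (t + T) = ip t /\ vp (t + T) = vp t).

Definition is_integral (f : R -> R) (a b l : R) : Prop :=
  exists pr : Riemann_integrable f a b, RiemannInt pr = l.

Definition has_average (f : R -> R) (a : R) : Prop :=
  (forall tau, 0 < tau -> exists l, is_integral f 0 tau l) /\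
  (forall eps, 0 < eps -> exists M, forall tau l, M < tau -> 0 < tau ->
      is_integral f 0 tau l -> Rabs (l / tau - a) < eps).

(* Main.v *)
Require Import Defs.
From Stdlib Require Import Reals Lra Lia Classical Arith ZArith.
Open Scope R_scope.

Lemma mvt_lim (f g : R -> R) a b : a < b ->
  (forall x, a <= x <= b -> continuity_pt f x) ->
  (forall x, a < x < b -> derivable_pt_lim f x (g x)) ->
  exists c, a < c < b /\ f b - f a = g c * (b - a).
Proof.
  intros Hab Hc Hd.
  pose (pr1 := fun c (P : a < c < b) => exist (fun l => derivable_pt_abs f c l) (g c) (Hd c P)).
  destruct (MVT f id a b pr1 (fun c _ => derivable_pt_id c) Hab Hc
     (fun c _ => derivable_continuous_pt _ _ (derivable_pt_id c))) as [c [P HP]].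
  exists c; split; [exact P|].
  rewrite derive_pt_id in HP. simpl in HP. unfold id in HP. lra.
Qed.

Lemma mvt_abs (f g : R -> R) a b K : a <= b ->
  (forall x, a <= x <= b -> continuity_pt f x) ->
  (forall x, a < x < b -> derivable_pt_lim f x (g x)) ->
  (forall x, a < x < b -> Rabs (g x) <= K) ->
  Rabs (f b - f a) <= K * (b - a).
Proof.
  intros Hab Hc Hd HK. destruct (Req_dec a b) as [->|Hne].
  - replace (f b - f b) with 0 by ring. rewrite Rabs_R0. lra.
  - destruct (mvt_lim f g a b) as [c [Pc Hc']]; try lra; auto.
    rewrite Hc', Rabs_mult, (Rabs_right (b - a)) by lra.
    apply Rmult_le_compat_r; [lra| apply HK; auto].
Qed.

Lemma mvt_le (f g : R -> R) a b K : a <= b ->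
  (forall x, a <= x <= b -> continuity_pt f x) ->
  (forall x, a < x < b -> derivable_pt_lim f x (g x)) ->
  (forall x, a < x < b -> g x <= K) ->
  f b - f a <= K * (b - a).
Proof.
  intros Hab Hc Hd HK. destruct (Req_dec a b) as [->|Hne].
  - lra.
  - destruct (mvt_lim f g a b) as [c [Pc Hc']]; try lra; auto.
    rewrite Hc'. apply Rmult_le_compat_r; [lra| apply HK; auto].
Qed.

Lemma is_integral_unique f a b l1 l2 : is_integral f a b l1 -> is_integral f a b l2 -> l1 = l2.
Proof. intros [p1 <-] [p2 <-]. apply RiemannInt_P5. Qed.

Lemma is_integral_chasles f a b c l1 l2 : is_integral f a b l1 -> is_integral f b c l2 ->
  is_integral f a c (l1 + l2).
Proof.
  intros [p1 <-] [p2 <-]. exists (RiemannInt_P24 p1 p2). symmetry. apply RiemannInt_P26.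
Qed.

Lemma is_integral_ext f g a b l : a <= b -> (forall x, a <= x <= b -> f x = g x) ->
  is_integral f a b l -> is_integral g a b l.
Proof.
  intros Hab Hfg [p <-].
  assert (pg : Riemann_integrable g a b).
  { refine (Riemann_integrable_ext g _ p). intros x Hx. apply Hfg.
    rewrite Rmin_left, Rmax_right in Hx; auto. }
  exists pg. apply RiemannInt_P18; auto. intros x Hx. symmetry; apply Hfg; lra.
Qed.

Lemma ftc (f F : R -> R) a b : a <= b ->
  (forall x, a <= x <= b -> continuity_pt f x) ->
  (forall x, a <= x <= b -> continuity_pt F x) ->
  (forall x, a < x < b -> derivable_pt_lim F x (f x)) ->
  is_integral f a b (F b - F a).
Proof.
  intros Hab Hfc HFc HFd.
  exists (continuity_implies_RiemannInt Hab Hfc).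
  rewrite (RiemannInt_P20 Hab (FTC_P1 Hab Hfc)).
  set (P := primitive Hab (FTC_P1 Hab Hfc)).
  destruct (Req_dec a b) as [<-|Hne]; [ring|].
  destruct (mvt_lim (fun x => P x - F x) (fun _ => 0) a b) as [c [_ Hc]]; try lra.
  - intros x Hx. apply continuity_pt_minus; auto.
    apply derivable_continuous_pt. exists (f x). apply RiemannInt_P28; auto.
  - intros x Hx. replace 0 with (f x - f x) by ring.
    apply derivable_pt_lim_minus; auto. apply RiemannInt_P27; auto.
Qed.

Definition sg (k:nat) : R := if Nat.even k then 1 else -1.
Definition fk (k:nat) : R := if Nat.even k then 1 else 0.

Lemma sg2 k : sg k * sg k = 1.
Proof. unfold sg; destruct (Nat.even k); ring. Qed.
Lemma fksg k : fk k * (1 - sg k) = 0.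
Proof. unfold sg, fk; destruct (Nat.even k); ring. Qed.
Lemma sgS k : sg (S k) = - sg k.
Proof. unfold sg. rewrite Nat.even_succ, <- Nat.negb_even. destruct (Nat.even k); simpl; ring. Qed.

Definition psol (Rr L C Vdc h : R) (i v : R -> R) : Prop :=
  (forall t, continuity_pt i t) /\ (forall t, continuity_pt v t) /\
  forall k t, INR k * h < t < INR (S k) * h ->
    derivable_pt_lim i t (- (Rr/L) * i t - sg k * (1/L) * v t + fk k * (Vdc/L)) /\
    derivable_pt_lim v t (sg k * (1/C) * i t).

Definition clamp (f : R -> R) (t : R) := f (Rmax 0 t).

Lemma Rmax_lip x t : Rabs (Rmax 0 x - Rmax 0 t) <= Rabs (x - t).
Proof.
  unfold Rmax. destruct (Rle_dec 0 x); destruct (Rle_dec 0 t);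
  unfold Rabs; repeat destruct Rcase_abs; lra.
Qed.

Lemma clamp_cont f : cont_nonneg f -> forall t, continuity_pt (clamp f) t.
Proof.
  intros H t eps Heps.
  assert (Ht : 0 <= Rmax 0 t) by apply Rmax_l.
  destruct (H _ Ht eps Heps) as [alp [Halp Hx]].
  exists alp; split; auto. intros x [_ Hd].
  apply (Hx (Rmax 0 x)). split; [apply Rmax_l|].
  simpl in *. unfold Rdist in *. eapply Rle_lt_trans; [apply Rmax_lip| exact Hd].
Qed.

Lemma clamp_pos f t : 0 <= t -> clamp f t = f t.
Proof. intros. unfold clamp. rewrite Rmax_right; auto. Qed.

Lemma dlim_loc f g x l : derivable_pt_lim f x l ->
  (exists d, 0 < d /\ forall y, Rabs (y - x) < d -> g y = f y) -> derivable_pt_lim g x l.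
Proof.
  intros Hf [d [Hd Heq]] eps Heps.
  destruct (Hf eps Heps) as [del Hdel].
  assert (Hm : 0 < Rmin del d) by (apply Rmin_pos; [apply cond_pos| lra]).
  exists (mkposreal _ Hm). intros k Hk Hkl. simpl in Hkl.
  rewrite !Heq.
  - apply Hdel; auto. eapply Rlt_le_trans; [exact Hkl| apply Rmin_l].
  - replace (x - x) with 0 by ring. rewrite Rabs_R0; lra.
  - replace (x + k - x) with k by ring. eapply Rlt_le_trans; [exact Hkl| apply Rmin_r].
Qed.

Lemma dlim_val f x l l' : l = l' -> derivable_pt_lim f x l -> derivable_pt_lim f x l'.
Proof. intros ->; auto. Qed.

Lemma dlim_clamp f t l : 0 < t -> derivable_pt_lim f t l -> derivable_pt_lim (clamp f) t l.
Proof.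
  intros Ht Hf. apply (dlim_loc f); auto. exists t; split; auto.
  intros y Hy. apply clamp_pos. apply Rabs_def2 in Hy. lra.
Qed.

Lemma sol_psol Rr L C Vdc T i v : 0 < T -> is_solution Rr L C Vdc T i v ->
  psol Rr L C Vdc (T/2) (clamp i) (clamp v).
Proof.
  intros HT [Hci [Hcv [H1 H2]]].
  split; [apply clamp_cont; auto|]. split; [apply clamp_cont; auto|].
  intros k t Ht.
  assert (Ht0 : 0 < t).
  { assert (0 <= INR k * (T/2)) by (apply Rmult_le_pos; [apply pos_INR| lra]). lra. }
  rewrite !(clamp_pos _ t) by lra.
  destruct (Nat.Even_or_Odd k) as [[m ->]|[m ->]].
  - assert (E : INR (2*m) * (T/2) = INR m * T) by (rewrite mult_INR; simpl; field).
    assert (E' : INR (S (2*m)) * (T/2) = INR m * T + T/2) by (rewrite S_INR, mult_INR; simpl; field).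
    rewrite E, E' in Ht. destruct (H1 m t Ht) as [Hi Hv].
    unfold sg, fk. rewrite Nat.even_even.
    split; apply dlim_clamp; auto; eapply dlim_val; try eassumption; ring.
  - assert (E : INR (2*m+1) * (T/2) = INR m * T + T/2) by (rewrite plus_INR, mult_INR; simpl; field).
    assert (E' : INR (S (2*m+1)) * (T/2) = INR m * T + T) by (rewrite S_INR, plus_INR, mult_INR; simpl; field).
    rewrite E, E' in Ht. destruct (H2 m t Ht) as [Hi Hv].
    unfold sg, fk. rewrite Nat.even_odd.
    split; apply dlim_clamp; auto; eapply dlim_val; try eassumption; ring.
Qed.

Fixpoint gsum (g : nat -> R) (n : nat) : R :=
  match n with O => 0 | S n => gsum g n + g n end.

Lemma dlim_lin3 f g x a b c lf lg : derivable_pt_lim f x lf -> derivable_pt_lim g x lg ->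
  derivable_pt_lim (fun t => a * t + b * f t + c * g t) x (a + b*lf + c*lg).
Proof.
  intros Hf Hg.
  assert (H1 := derivable_pt_lim_scal id a x 1 (derivable_pt_lim_id x)).
  assert (H2 := derivable_pt_lim_scal f b x lf Hf).
  assert (H3 := derivable_pt_lim_scal g c x lg Hg).
  assert (H := derivable_pt_lim_plus _ _ x _ _ (derivable_pt_lim_plus _ _ x _ _ H1 H2) H3).
  unfold plus_fct, mult_real_fct, id in H. eapply dlim_val; [|exact H]. ring.
Qed.

Lemma cont_lin3 f g x a b c : continuity_pt f x -> continuity_pt g x ->
  continuity_pt (fun t => a * t + b * f t + c * g t) x.
Proof.
  intros Hf Hg.
  assert (H1 := continuity_pt_scal id a x (derivable_continuous_pt _ _ (derivable_pt_id x))).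
  assert (H2 := continuity_pt_scal f b x Hf).
  assert (H3 := continuity_pt_scal g c x Hg).
  exact (continuity_pt_plus _ _ x (continuity_pt_plus _ _ x H1 H2) H3).
Qed.

Section Grid.
Variables (h : R) (f : R -> R) (F : nat -> R -> R).
Hypothesis hpos : 0 < h.
Hypothesis fc : forall t, continuity_pt f t.
Hypothesis Fc : forall k t, continuity_pt (F k) t.
Hypothesis Fd : forall k t, INR k * h < t < INR (S k) * h -> derivable_pt_lim (F k) t (f t).

Definition gterm k := F k (INR (S k) * h) - F k (INR k * h).

Lemma piece_int k a b : INR k * h <= a <= b -> b <= INR (S k) * h ->
  is_integral f a b (F k b - F k a).
Proof.
  intros Ha Hb. apply ftc; auto; try lra. intros x Hx. apply Fd. lra.
Qed.

Lemma grid_int n : is_integral f 0 (INR n * h) (gsum gterm n).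
Proof.
  induction n.
  - simpl. replace (0 * h) with 0 by ring.
    replace 0 with (F 0%nat 0 - F 0%nat 0) at 3 by ring. apply ftc; auto; intros; lra.
  - simpl gsum. apply is_integral_chasles with (INR n * h); auto.
    apply piece_int.
    + rewrite S_INR. split; lra.
    + lra.
Qed.

Lemma part_int n tau : INR n * h <= tau <= INR (S n) * h ->
  is_integral f 0 tau (gsum gterm n + (F n tau - F n (INR n * h))).
Proof.
  intros Ht. apply is_integral_chasles with (INR n * h). apply grid_int.
  apply piece_int; lra.
Qed.
End Grid.

Lemma floor_ex p tau : 0 < p -> 0 <= tau -> exists n, INR n * p <= tau < INR (S n) * p.
Proof.
  intros Hp Ht.
  destruct (archimed (tau / p)) as [H1 H2].
  assert (Hz : (0 < up (tau/p))%Z).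
  { apply lt_IZR. assert (0 <= tau/p) by (unfold Rdiv; apply Rmult_le_pos; [lra|left; apply Rinv_0_lt_compat; lra]). lra. }
  exists (Z.to_nat (up (tau/p) - 1)).
  rewrite S_INR, INR_IZR_INZ, Z2Nat.id by lia. rewrite minus_IZR. simpl.
  assert (E : tau = tau / p * p) by (field; lra).
  split.
  - rewrite E at 2. apply Rmult_le_compat_r; lra.
  - rewrite E at 1. apply Rmult_lt_compat_r; lra.
Qed.

Lemma dlim_sq f x l : derivable_pt_lim f x l -> derivable_pt_lim (fun t => f t * f t) x (2 * f x * l).
Proof.
  intros H. assert (H' := derivable_pt_lim_mult f f x l l H H). unfold mult_fct in H'.
  eapply dlim_val; [|exact H']. ring.
Qed.

Lemma mono_grid h (E : R -> R) : 0 < h ->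
  (forall k a b, INR k * h <= a -> a <= b -> b <= INR (S k) * h -> E b <= E a) ->
  forall s t, 0 <= s -> s <= t -> E t <= E s.
Proof.
  intros hp Hp.
  assert (P : forall n s t, 0 <= s -> s <= t -> t <= INR n * h -> E t <= E s).
  { induction n; intros s t H1 H2 H3.
    - simpl in H3. assert (s = t) by lra. subst; lra.
    - destruct (Rle_dec t (INR n * h)). apply IHn; auto.
      destruct (Rle_dec (INR n * h) s). apply (Hp n); lra.
      apply Rle_trans with (E (INR n * h)).
      + apply (Hp n); lra.
      + apply IHn; lra. }
  intros s t H1 H2. destruct (floor_ex h t hp) as [n Hn]; [lra|].
  apply (P (S n)); lra.
Qed.

Section Hom.
Variables (Rr L C h : R) (ei ev : R -> R).
Hypotheses (HR : 0 < Rr) (HL : 0 < L) (HC : 0 < C) (Hh : 0 < h).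
Hypothesis Hs : psol Rr L C 0 h ei ev.

Definition En t := L / 2 * (ei t * ei t) + C / 2 * (ev t * ev t).

Lemma ode_h k t : INR k * h < t < INR (S k) * h ->
    derivable_pt_lim ei t (- (Rr/L) * ei t - sg k * (1/L) * ev t) /\
    derivable_pt_lim ev t (sg k * (1/C) * ei t).
Proof.
  intros Ht. destruct Hs as [_ [_ H]]. destruct (H k t Ht) as [H1 H2]. split; auto.
  eapply dlim_val; [|exact H1]. unfold Rdiv; ring.
Qed.

Lemma En_cont t : continuity_pt En t.
Proof.
  destruct Hs as [Hi [Hv _]]. unfold En.
  apply continuity_pt_plus; apply continuity_pt_scal; apply continuity_pt_mult; auto.
Qed.

Lemma En_der k t : INR k * h < t < INR (S k) * h -> derivable_pt_lim En t (- Rr * (ei t * ei t)).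
Proof.
  intros Ht. destruct (ode_h k t Ht) as [H1 H2].
  assert (H := derivable_pt_lim_plus _ _ t _ _
     (derivable_pt_lim_scal _ (L/2) t _ (dlim_sq _ _ _ H1))
     (derivable_pt_lim_scal _ (C/2) t _ (dlim_sq _ _ _ H2))).
  unfold plus_fct, mult_real_fct in H. eapply dlim_val; [|exact H].
  field. split; lra.
Qed.

Lemma En_dec s t : 0 <= s -> s <= t -> En t <= En s.
Proof.
  apply (mono_grid h); auto. intros k a b Ha Hab Hb.
  assert (En b - En a <= 0 * (b - a)).
  { apply (mvt_le En (fun t => - Rr * (ei t * ei t))); auto.
    - intros; apply En_cont.
    - intros x Hx. apply (En_der k). lra.
    - intros x _. assert (0 <= ei x * ei x) by nra. nra. }
  lra.
Qed.

Lemma En_nonneg t : 0 <= En t.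
Proof. unfold En. assert (0 <= ei t * ei t) by nra. assert (0 <= ev t * ev t) by nra.
  assert (0 <= L/2) by lra. assert (0 <= C/2) by lra. nra. Qed.

Lemma abs_le_sq x : Rabs x <= 1 + x * x.
Proof. unfold Rabs; destruct Rcase_abs; nra. Qed.

Definition Bi := 1 + 2 * En 0 / L.
Definition Bv := 1 + 2 * En 0 / C.
Definition Bd := (Rr * Bi + Bv) / L.

Lemma ei_bound t : 0 <= t -> Rabs (ei t) <= Bi.
Proof.
  intros Ht. eapply Rle_trans; [apply abs_le_sq|]. unfold Bi.
  assert (En t <= En 0) by (apply En_dec; lra).
  assert (0 <= ev t * ev t) by nra.
  assert (L / 2 * (ei t * ei t) <= En 0) by (unfold En in *; nra).
  apply Rplus_le_compat_l. apply Rmult_le_reg_l with (L/2); [lra|].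
  replace (L / 2 * (2 * En 0 / L)) with (En 0) by (field; lra). lra.
Qed.

Lemma ev_bound t : 0 <= t -> Rabs (ev t) <= Bv.
Proof.
  intros Ht. eapply Rle_trans; [apply abs_le_sq|]. unfold Bv.
  assert (En t <= En 0) by (apply En_dec; lra).
  assert (0 <= ei t * ei t) by nra.
  assert (C / 2 * (ev t * ev t) <= En 0) by (unfold En in *; nra).
  apply Rplus_le_compat_l. apply Rmult_le_reg_l with (C/2); [lra|].
  replace (C / 2 * (2 * En 0 / C)) with (En 0) by (field; lra). lra.
Qed.

Lemma Rabs_sg k : Rabs (sg k) = 1.
Proof. unfold sg; destruct (Nat.even k); [apply Rabs_R1|]. rewrite Rabs_left; lra. Qed.

Lemma ei_lip k a b : INR k * h <= a -> a <= b -> b <= INR (S k) * h ->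
  Rabs (ei b - ei a) <= Bd * (b - a).
Proof.
  intros Ha Hab Hb. destruct Hs as [Hi [Hv _]].
  apply (mvt_abs ei (fun t => - (Rr/L) * ei t - sg k * (1/L) * ev t)); auto.
  - intros x Hx. apply (ode_h k). lra.
  - intros x Hx.
    assert (Hx0 : 0 <= x) by (assert (0 <= INR k * h) by (apply Rmult_le_pos; [apply pos_INR|lra]); lra).
    assert (H1 := ei_bound x Hx0). assert (H2 := ev_bound x Hx0).
    unfold Rminus. eapply Rle_trans; [apply Rabs_triang|].
    repeat rewrite ?Rabs_mult, ?Rabs_Ropp. rewrite Rabs_sg.
    rewrite (Rabs_right (Rr/L)) by (apply Rle_ge; unfold Rdiv; apply Rmult_le_pos; [lra|left; apply Rinv_0_lt_compat; lra]).
    rewrite (Rabs_right (1/L)) by (apply Rle_ge; unfold Rdiv; apply Rmult_le_pos; [lra|left; apply Rinv_0_lt_compat; lra]).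
    unfold Bd. unfold Rdiv.
    assert (0 < / L) by (apply Rinv_0_lt_compat; lra).
    assert (0 <= Rabs (ei x)) by apply Rabs_pos. assert (0 <= Rabs (ev x)) by apply Rabs_pos.
    replace (Rr * / L * Rabs (ei x) + 1 * (1 * / L) * Rabs (ev x)) with ((Rr * Rabs (ei x) + Rabs (ev x)) * / L) by ring.
    apply Rmult_le_compat_r; [lra|].
    assert (Rr * Rabs (ei x) <= Rr * Bi) by (apply Rmult_le_compat_l; lra). lra.
Qed.

Lemma ei_lip2 k y t : INR k * h <= y <= INR (S k) * h -> INR k * h <= t <= INR (S k) * h ->
  Rabs (ei y - ei t) <= Bd * Rabs (y - t).
Proof.
  intros Hy Ht. destruct (Rle_dec t y).
  - rewrite (Rabs_right (y - t)) by lra. apply (ei_lip k); lra.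
  - rewrite Rabs_minus_sym, (Rabs_minus_sym y). rewrite (Rabs_right (t - y)) by lra.
    apply (ei_lip k); lra.
Qed.

Lemma Bd_pos : 0 <= Bd.
Proof.
  unfold Bd, Bi, Bv. assert (0 <= En 0) by apply En_nonneg.
  assert (0 <= 2 * En 0 / L) by (unfold Rdiv; apply Rmult_le_pos; [lra|left; apply Rinv_0_lt_compat; lra]).
  assert (0 <= 2 * En 0 / C) by (unfold Rdiv; apply Rmult_le_pos; [lra|left; apply Rinv_0_lt_compat; lra]).
  unfold Rdiv. apply Rmult_le_pos; [nra|left; apply Rinv_0_lt_compat; lra].
Qed.

Lemma claimA : forall eps, 0 < eps -> exists K, forall t, K <= t -> Rabs (ei t) < eps.
Proof.
  intros eps He. apply NNPP. intro Hn.
  assert (Hc : forall K, exists t, K <= t /\ eps <= Rabs (ei t)).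
  { intro K. apply NNPP. intro H'. apply Hn. exists K. intros t Ht.
    apply Rnot_le_lt. intro. apply H'. exists t; auto. }
  assert (HB := Bd_pos).
  set (d := Rmin (eps / (2 * (Bd + 1))) (h / 2)).
  assert (Hd1 : d <= eps / (2 * (Bd + 1))) by apply Rmin_l.
  assert (Hd2 : d <= h / 2) by apply Rmin_r.
  assert (Hd0 : 0 < d) by (apply Rmin_pos; [apply Rdiv_lt_0_compat; lra | lra]).
  assert (HBd : Bd * d <= eps / 2).
  { apply Rle_trans with (Bd * (eps / (2 * (Bd + 1)))). apply Rmult_le_compat_l; lra.
    apply Rmult_le_reg_r with (2 * (Bd + 1)); [lra|].
    replace (Bd * (eps / (2 * (Bd + 1))) * (2 * (Bd + 1))) with (Bd * eps) by (field; lra).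
    nra. }
  set (c := Rr * (eps / 2) * (eps / 2) * d).
  assert (Hcp : 0 < c) by (unfold c; repeat apply Rmult_lt_0_compat; lra).
  assert (Hj : forall j : nat, exists s, 0 <= s /\ En s <= En 0 - INR j * c).
  { induction j.
    - exists 0. simpl. lra.
    - destruct IHj as [s [Hs0 Hs1]].
      destruct (Hc (s + h)) as [t [Ht1 Ht2]].
      destruct (floor_ex h t Hh) as [k Hk]; [lra|].
      assert (Ha : exists a, INR k * h <= a /\ a + d <= INR (S k) * h /\ a <= t <= a + d /\ s <= a).
      { destruct (Rle_dec (t + d) (INR (S k) * h)).
        - exists t. lra.
        - exists (t - d). rewrite S_INR in *. lra. }
      destruct Ha as [a [Ha1 [Ha2 [Ha3 Ha4]]]].
      exists (a + d). split; [lra|].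
      assert (Hdrop : En (a + d) - En a <= - (Rr * (eps / 2) * (eps / 2)) * (a + d - a)).
      { apply (mvt_le En (fun t => - Rr * (ei t * ei t))); try lra.
        - intros; apply En_cont.
        - intros x Hx. apply (En_der k). lra.
        - intros x Hx.
          assert (Hl := ei_lip2 k x t ltac:(lra) ltac:(lra)).
          assert (Rabs (x - t) <= d) by (apply Rabs_le; lra).
          assert (Bd * Rabs (x - t) <= Bd * d) by (apply Rmult_le_compat_l; lra).
          assert (eps / 2 <= Rabs (ei x)).
          { assert (Rabs (ei t) <= Rabs (ei x) + Rabs (ei x - ei t)).
            { replace (ei t) with (ei x - (ei x - ei t)) at 1 by ring.
              eapply Rle_trans; [apply Rabs_triang|]. rewrite Rabs_Ropp. lra. }
            lra. }
          assert (eps / 2 * (eps / 2) <= ei x * ei x).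
          { replace (ei x * ei x) with (Rabs (ei x) * Rabs (ei x)).
            - assert (0 <= eps / 2) by lra. apply Rmult_le_compat; lra.
            - rewrite <- Rabs_mult. apply Rabs_right. apply Rle_ge; nra. }
          nra. }
      assert (En a <= En s) by (apply En_dec; lra).
      rewrite S_INR. unfold c in *. nra. }
  destruct (floor_ex c (En 0) Hcp (En_nonneg 0)) as [n Hn'].
  destruct (Hj (S n)) as [s [Hs0 Hs1]].
  assert (0 <= En s) by apply En_nonneg. lra.
Qed.

Lemma claimB : forall eps, 0 < eps -> exists N, forall k, (N <= k)%nat -> Rabs (ev (INR k * h)) < eps.
Proof.
  intros eps He.
  set (M := 2 * L / h + Rr + h / C + 1).
  assert (HM : 0 < M) by (unfold M; assert (0 < 2 * L / h) by (apply Rdiv_lt_0_compat; lra);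
     assert (0 < h / C) by (apply Rdiv_lt_0_compat; lra); lra).
  set (eta := eps / M).
  assert (Heta : 0 < eta) by (apply Rdiv_lt_0_compat; lra).
  destruct (claimA eta Heta) as [K HK].
  destruct (floor_ex h (Rmax 0 K) Hh (Rmax_l _ _)) as [n Hn].
  exists (S n). intros k Hk.
  set (a := INR k * h).
  assert (HaK : K <= a).
  { apply Rle_trans with (Rmax 0 K); [apply Rmax_r|]. unfold a.
    apply Rle_trans with (INR (S n) * h); [lra|]. apply Rmult_le_compat_r; [lra|]. apply le_INR; auto. }
  assert (Ha0 : 0 <= a) by (unfold a; apply Rmult_le_pos; [apply pos_INR|lra]).
  assert (HSk : INR (S k) * h = a + h) by (unfold a; rewrite S_INR; ring).
  destruct Hs as [Hi [Hv _]].
  destruct (mvt_lim ei (fun t => - (Rr/L) * ei t - sg k * (1/L) * ev t) a (a + h)) as [c [Hc Hc']]; try lra.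
  - intros; auto.
  - intros x Hx. apply (ode_h k). fold a. lra.
  - assert (Hevc : Rabs (ev c) <= Rr * eta + 2 * L * eta / h).
    { assert (E1 : ev c = sg k * (L / h) * (- (ei (a + h) - ei a)) - sg k * Rr * ei c).
      { assert (Hsg := sg2 k).
        apply Rmult_eq_reg_l with (sg k * (1/L) * h); [|apply Rmult_integral_contrapositive; split;
          [apply Rmult_integral_contrapositive; split; [unfold sg; destruct (Nat.even k); lra| unfold Rdiv; apply Rmult_integral_contrapositive; split; [lra| apply Rinv_neq_0_compat; lra]] |lra]].
        replace (a + h - a) with h in Hc' by ring.
        replace (sg k * (1 / L) * h * (sg k * (L / h) * - (ei (a + h) - ei a) - sg k * Rr * ei c))
          with ((sg k * sg k) * (- (ei (a + h) - ei a) - Rr / L * h * ei c)) by (field; split; lra).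
        rewrite Hsg. rewrite Hc'. ring. }
      rewrite E1. unfold Rminus. eapply Rle_trans; [apply Rabs_triang|].
      repeat rewrite ?Rabs_mult, ?Rabs_Ropp. rewrite Rabs_sg.
      assert (H1 : Rabs (ei (a + h)) < eta) by (apply HK; lra).
      assert (H2 : Rabs (ei a) < eta) by (apply HK; lra).
      assert (H3 : Rabs (ei c) < eta) by (apply HK; lra).
      assert (H4 : Rabs (ei (a + h) + - ei a) <= 2 * eta).
      { eapply Rle_trans; [apply Rabs_triang|]. rewrite Rabs_Ropp. lra. }
      rewrite (Rabs_right Rr) by lra. rewrite (Rabs_right (L/h)) by (apply Rle_ge; left; apply Rdiv_lt_0_compat; lra).
      assert (0 < L / h) by (apply Rdiv_lt_0_compat; lra).
      replace (2 * L * eta / h) with (L / h * (2 * eta)) by (field; lra). nra. }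
    assert (Hdv : Rabs (ev c - ev a) <= eta / C * (c - a)).
    { apply (mvt_abs ev (fun t => sg k * (1/C) * ei t)); try lra; auto.
      - intros x Hx. apply (ode_h k). fold a. lra.
      - intros x Hx. rewrite !Rabs_mult, Rabs_sg. rewrite (Rabs_right (1/C)) by (apply Rle_ge; left; apply Rdiv_lt_0_compat; lra).
        assert (Rabs (ei x) < eta) by (apply HK; lra).
        unfold Rdiv. assert (0 < / C) by (apply Rinv_0_lt_compat; lra). nra. }
    assert (Habs : Rabs (ev a) <= Rabs (ev c) + Rabs (ev c - ev a)).
    { replace (ev a) with (ev c - (ev c - ev a)) at 1 by ring.
      eapply Rle_trans; [apply Rabs_triang|]. rewrite Rabs_Ropp. lra. }
    assert (eta / C * (c - a) <= eta * (h / C)).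
    { unfold Rdiv. assert (0 < / C) by (apply Rinv_0_lt_compat; lra).
      replace (eta * (h * / C)) with (eta * / C * h) by ring.
      apply Rmult_le_compat_l; [apply Rmult_le_pos; lra| lra]. }
    assert (eta * M = eps) by (unfold eta; field; lra).
    unfold M in *. fold a. 
    assert (Rr * eta + 2 * L * eta / h + eta * (h / C) < eta * (2 * L / h + Rr + h / C + 1)).
    { replace (2 * L * eta / h) with (eta * (2 * L / h)) by (field; lra). nra. }
    lra.
Qed.
End Hom.

Lemma gsum_nonneg g n : (forall k, 0 <= g k) -> 0 <= gsum g n.
Proof. intros H; induction n; simpl; [lra|]. specialize (H n); lra. Qed.

Lemma gsum_mono g m n : (forall k, 0 <= g k) -> (m <= n)%nat -> gsum g m <= gsum g n.
Proof.
  intros H Hmn. induction Hmn; [lra|]. simpl. specialize (H m0). lra.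
Qed.

Lemma cesaro (g : nat -> R) :
  (forall eps, 0 < eps -> exists N, forall k, (N <= k)%nat -> Rabs (g k) < eps) ->
  forall eps, 0 < eps -> exists K, forall n, gsum (fun k => Rabs (g k)) n <= K + eps * INR n.
Proof.
  intros Hg eps He. destruct (Hg eps He) as [N HN].
  exists (gsum (fun k => Rabs (g k)) N). intro n. induction n.
  - simpl. rewrite Rmult_0_r, Rplus_0_r. apply gsum_nonneg. intro; apply Rabs_pos.
  - destruct (le_lt_dec N n) as [Hl|Hl].
    + simpl gsum. rewrite S_INR. specialize (HN n Hl). lra.
    + assert (gsum (fun k => Rabs (g k)) (S n) <= gsum (fun k => Rabs (g k)) N).
      { apply gsum_mono; [intro; apply Rabs_pos| lia]. }
      assert (0 <= eps * INR (S n)) by (apply Rmult_le_pos; [lra|apply pos_INR]). lra.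
Qed.

Lemma gsum_alt_bound (u : nat -> R) n :
  Rabs (gsum (fun k => sg k * (u (S k) - u k)) n)
  <= gsum (fun k => Rabs (u (S k))) n + gsum (fun k => Rabs (u k)) n.
Proof.
  induction n; simpl.
  - rewrite Rabs_R0; lra.
  - eapply Rle_trans; [apply Rabs_triang|].
    rewrite Rabs_mult, Rabs_sg.
    assert (Rabs (u (S n) - u n) <= Rabs (u (S n)) + Rabs (u n)).
    { unfold Rminus. eapply Rle_trans; [apply Rabs_triang|]. rewrite Rabs_Ropp; lra. }
    lra.
Qed.

Lemma avg_crit f a :
  (forall tau, 0 < tau -> exists l, is_integral f 0 tau l) ->
  (forall eta, 0 < eta -> exists K, forall tau l, 0 < tau -> is_integral f 0 tau l ->
      Rabs (l - a * tau) <= K + eta * tau) ->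
  has_average f a.
Proof.
  intros H1 H2. split; auto.
  intros eps He. destruct (H2 (eps/2)) as [K HK]; [lra|].
  exists (Rmax 0 (2 * K / eps)). intros tau l Hm Ht Hl.
  assert (Hb := HK tau l Ht Hl).
  assert (E : l / tau - a = (l - a * tau) / tau) by (field; lra).
  rewrite E. unfold Rdiv. rewrite Rabs_mult, (Rabs_right (/ tau)) by (apply Rle_ge; left; apply Rinv_0_lt_compat; lra).
  apply Rmult_lt_reg_r with tau; [lra|].
  rewrite Rmult_assoc, Rinv_l, Rmult_1_r by lra.
  assert (2 * K / eps < tau) by (eapply Rle_lt_trans; [apply Rmax_r| exact Hm]).
  assert (K < eps / 2 * tau).
  { apply Rmult_lt_compat_r with (r := eps / 2) in H; [|lra].
    replace (2 * K / eps * (eps / 2)) with K in H by (field; lra). lra. }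
  lra.
Qed.

Lemma avg_clamp f a : has_average (clamp f) a -> has_average f a.
Proof.
  intros [H1 H2]. split.
  - intros tau Ht. destruct (H1 tau Ht) as [l Hl]. exists l.
    apply (is_integral_ext (clamp f)); [lra| |auto]. intros; apply clamp_pos; lra.
  - intros eps He. destruct (H2 eps He) as [M HM]. exists M. intros tau l Hm Ht Hl.
    apply HM; auto. apply (is_integral_ext f); [lra| |auto]. intros; symmetry; apply clamp_pos; lra.
Qed.

Lemma shift_n (f : R -> R) p : (forall t, 0 <= t -> f (t + p) = f t) ->
  forall n s, 0 <= p -> 0 <= s -> f (s + INR n * p) = f s.
Proof.
  intros H n s Hp Hs. induction n.
  - simpl. f_equal; ring.
  - rewrite S_INR. replace (s + (INR n + 1) * p) with (s + INR n * p + p) by ring.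
    rewrite H; auto. assert (0 <= INR n * p) by (apply Rmult_le_pos; [apply pos_INR|lra]). lra.
Qed.

Lemma per_bound (f : R -> R) p : 0 < p -> (forall t, continuity_pt f t) ->
  (forall t, 0 <= t -> f (t + p) = f t) -> exists M, forall t, 0 <= t -> Rabs (f t) <= M.
Proof.
  intros Hp Hc Hper.
  destruct (continuity_ab_maj (fun t => Rabs (f t)) 0 p) as [x [Hx _]]; [lra| |].
  { intros c _. apply (continuity_pt_comp f Rabs); auto. apply Rcontinuity_abs. }
  exists (Rabs (f x)). intros t Ht. destruct (floor_ex p t Hp Ht) as [n Hn].
  rewrite S_INR in Hn.
  replace t with ((t - INR n * p) + INR n * p) by ring.
  rewrite (shift_n f p Hper n); try lra. apply Hx. lra.
Qed.

Lemma zero_of_small x : (forall eps, 0 < eps -> Rabs x < eps) -> x = 0.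
Proof.
  intros H. destruct (Req_dec x 0); auto. exfalso.
  assert (0 < Rabs x) by (apply Rabs_pos_lt; auto). specialize (H (Rabs x) H1). lra.
Qed.

Lemma dlim_shift f t p l : derivable_pt_lim f (t + p) l -> derivable_pt_lim (fun s => f (s + p)) t l.
Proof.
  intros H eps He. destruct (H eps He) as [d Hd]. exists d. intros k Hk Hkd.
  replace (t + k + p) with (t + p + k) by ring. apply Hd; auto.
Qed.

Lemma cont_shift f t p : continuity_pt f (t + p) -> continuity_pt (fun s => f (s + p)) t.
Proof.
  intros H. apply (continuity_pt_comp (fun s => s + p) f); auto.
  apply continuity_pt_plus. apply derivable_continuous_pt, derivable_pt_id.
  apply continuity_pt_const. intros x y; reflexivity.
Qed.

Lemma psol_diff Rr L C Vdc h i1 v1 i2 v2 : 0 < L ->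
  psol Rr L C Vdc h i1 v1 -> psol Rr L C Vdc h i2 v2 ->
  psol Rr L C 0 h (fun t => i1 t - i2 t) (fun t => v1 t - v2 t).
Proof.
  intros HL [c1 [d1 H1]] [c2 [d2 H2]]. split; [intro; apply continuity_pt_minus; auto|].
  split; [intro; apply continuity_pt_minus; auto|].
  intros k t Ht. destruct (H1 k t Ht) as [a1 b1]. destruct (H2 k t Ht) as [a2 b2].
  split.
  - eapply dlim_val; [|exact (derivable_pt_lim_minus _ _ _ _ _ a1 a2)]. field. lra.
  - eapply dlim_val; [|exact (derivable_pt_lim_minus _ _ _ _ _ b1 b2)]. ring.
Qed.

Lemma fkS k : fk (S k) = fk k - sg k.
Proof. unfold fk, sg. rewrite Nat.even_succ, <- Nat.negb_even. destruct (Nat.even k); simpl; ring. Qed.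

Lemma fk_sg k : fk k = (1 + sg k) / 2.
Proof. unfold fk, sg. destruct (Nat.even k); field. Qed.

Lemma psol_shift Rr L C Vdc h ip vp : 0 < L -> 0 < h ->
  psol Rr L C Vdc h ip vp ->
  psol Rr L C Vdc h (fun t => ip (t + h)) (fun t => Vdc - vp (t + h)).
Proof.
  intros HL Hh [c1 [d1 H1]]. split; [intro; apply cont_shift; auto|].
  split; [intro; apply continuity_pt_minus; [apply continuity_pt_const; intros x y; reflexivity| apply cont_shift; auto]|].
  intros k t Ht.
  assert (Ht' : INR (S k) * h < t + h < INR (S (S k)) * h).
  { rewrite !S_INR in *. lra. }
  destruct (H1 (S k) (t + h) Ht') as [a b]. split.
  - apply dlim_shift. eapply dlim_val; [|exact a]. rewrite sgS, fkS. field. lra.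
  - assert (b' := derivable_pt_lim_minus _ _ _ _ _ (derivable_pt_lim_const Vdc (t + h)) b).
    apply dlim_shift in b'. unfold minus_fct in b'. eapply dlim_val; [|exact b']. rewrite sgS. ring.
Qed.

Section Main.
Variables (Rr L C Vdc T : R) (i v ip vp : R -> R).
Hypotheses (HR : 0 < Rr) (HL : 0 < L) (HC : 0 < C) (HV : 0 < Vdc) (HT : 0 < T).
Hypothesis Hsol : is_solution Rr L C Vdc T i v.
Hypothesis Hper : is_periodic_solution Rr L C Vdc T ip vp.

Local Notation h := (T / 2).
Local Notation I := (clamp i).
Local Notation V := (clamp v).
Local Notation Ip := (clamp ip).
Local Notation Vp := (clamp vp).

Lemma Hh : 0 < h. Proof. lra. Qed.
Lemma HsX : psol Rr L C Vdc h I V. Proof. apply sol_psol; auto. Qed.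
Lemma HsP : psol Rr L C Vdc h Ip Vp. Proof. apply sol_psol; auto. apply Hper. Qed.

Lemma perP t : 0 <= t -> Ip (t + T) = Ip t /\ Vp (t + T) = Vp t.
Proof.
  intros Ht. unfold clamp. rewrite !Rmax_right by lra. apply Hper; auto.
Qed.

Lemma grid_T k n : INR k * h + INR n * T = INR (k + 2 * n) * h.
Proof. rewrite plus_INR, mult_INR. simpl. field. Qed.

Lemma exists_big K : exists n, K <= INR n * T.
Proof.
  destruct (floor_ex T (Rmax 0 K) HT (Rmax_l _ _)) as [n Hn]. exists (S n).
  assert (K <= Rmax 0 K) by apply Rmax_r. lra.
Qed.

Lemma sym k : Ip (INR (S k) * h) = Ip (INR k * h) /\ Vp (INR k * h) + Vp (INR (S k) * h) = Vdc.
Proof.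
  set (ei := fun t => Ip t - Ip (t + h)).
  set (ev := fun t => Vp t - (Vdc - Vp (t + h))).
  assert (Hs : psol Rr L C 0 h ei ev).
  { apply (psol_diff Rr L C Vdc); auto. apply HsP. apply psol_shift; auto. apply Hh. apply HsP. }
  assert (Hk0 : 0 <= INR k * h) by (apply Rmult_le_pos; [apply pos_INR| lra]).
  assert (Eih : forall n, ei (INR k * h + INR n * T) = ei (INR k * h)).
  { intro n. apply (shift_n ei T); try lra. intros t Ht. unfold ei.
    replace (t + T + h) with (t + h + T) by ring. rewrite (proj1 (perP t Ht)), (proj1 (perP (t + h) ltac:(lra))). ring. }
  assert (Evh : forall n, ev (INR k * h + INR n * T) = ev (INR k * h)).
  { intro n. apply (shift_n ev T); try lra. intros t Ht. unfold ev.
    replace (t + T + h) with (t + h + T) by ring. rewrite (proj2 (perP t Ht)), (proj2 (perP (t + h) ltac:(lra))). ring. }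
  assert (Z1 : ei (INR k * h) = 0).
  { apply zero_of_small. intros eps He.
    destruct (claimA Rr L C h ei ev HR HL HC Hh Hs eps He) as [K HK].
    destruct (exists_big K) as [n Hn]. rewrite <- (Eih n). apply HK. lra. }
  assert (Z2 : ev (INR k * h) = 0).
  { apply zero_of_small. intros eps He.
    destruct (claimB Rr L C h ei ev HR HL HC Hh Hs eps He) as [N HN].
    rewrite <- (Evh N). rewrite grid_T. apply HN. lia. }
  unfold ei, ev in *. rewrite S_INR. replace ((INR k + 1) * h) with (INR k * h + h) by ring.
  split; lra.
Qed.

Lemma Ip_grid k : Ip (INR k * h) = Ip 0.
Proof.
  induction k. simpl. f_equal; ring. rewrite (proj1 (sym k)). auto.
Qed.

Lemma Vp_grid k : Vp (INR k * h) = Vdc / 2 + sg k * (Vp 0 - Vdc / 2).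
Proof.
  induction k.
  - simpl. unfold sg; simpl. replace (0 * h) with 0 by ring. ring.
  - assert (H := proj2 (sym k)). rewrite sgS. lra.
Qed.

Lemma HsE : psol Rr L C 0 h (fun t => I t - Ip t) (fun t => V t - Vp t).
Proof. apply (psol_diff Rr L C Vdc); auto. apply HsX. apply HsP. Qed.

Definition evg j := V (INR j * h) - Vp (INR j * h).
Definition eig j := I (INR j * h) - Ip (INR j * h).

Lemma evg_small eps : 0 < eps -> exists N, forall k, (N <= k)%nat -> Rabs (evg k) < eps.
Proof. intros He. apply (claimB Rr L C h _ _ HR HL HC Hh HsE eps He). Qed.

Lemma evgS_small eps : 0 < eps -> exists N, forall k, (N <= k)%nat -> Rabs (evg (S k)) < eps.
Proof. intros He. destruct (evg_small eps He) as [N HN]. exists N. intros k Hk. apply HN. lia. Qed.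

Lemma eig_small eps : 0 < eps -> exists N, forall k, (N <= k)%nat -> Rabs (eig k) < eps.
Proof.
  intros He. destruct (claimA Rr L C h _ _ HR HL HC Hh HsE eps He) as [K HK].
  destruct (exists_big K) as [n Hn]. exists (2 * n)%nat. intros k Hk. unfold eig. apply HK.
  apply Rle_trans with (INR n * T); auto.
  replace (INR n * T) with (INR (2 * n) * h) by (rewrite mult_INR; simpl; field).
  apply Rmult_le_compat_r; [lra|]. apply le_INR; auto.
Qed.

Lemma eigS_small eps : 0 < eps -> exists N, forall k, (N <= k)%nat -> Rabs (eig (S k)) < eps.
Proof. intros He. destruct (eig_small eps He) as [N HN]. exists N. intros k Hk. apply HN. lia. Qed.

Lemma boundV : exists B, forall t, 0 <= t -> Rabs (V t) <= B.
Proof.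
  destruct HsP as [_ [cv _]].
  destruct (per_bound Vp T HT cv (fun t Ht => proj2 (perP t Ht))) as [M HM].
  exists (M + Bv L C (fun t => I t - Ip t) (fun t => V t - Vp t)). intros t Ht.
  assert (H1 := ev_bound Rr L C h _ _ HR HL HC Hh HsE t Ht). simpl in H1.
  assert (H2 := HM t Ht).
  replace (V t) with (Vp t + (V t - Vp t)) by ring.
  eapply Rle_trans; [apply Rabs_triang|]. lra.
Qed.

Lemma boundI : exists B, forall t, 0 <= t -> Rabs (I t) <= B.
Proof.
  destruct HsP as [ci _].
  destruct (per_bound Ip T HT ci (fun t Ht => proj1 (perP t Ht))) as [M HM].
  exists (M + Bi L C (fun t => I t - Ip t) (fun t => V t - Vp t)). intros t Ht.
  assert (H1 := ei_bound Rr L C h _ _ HR HL HC Hh HsE t Ht). simpl in H1.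
  assert (H2 := HM t Ht).
  replace (I t) with (Ip t + (I t - Ip t)) by ring.
  eapply Rle_trans; [apply Rabs_triang|]. lra.
Qed.

Definition FI k t := 0 * t + (sg k * C) * V t + 0 * I t.
Definition FV k t := fk k * Vdc * t + (- (Rr * C)) * V t + (- (sg k * L)) * I t.

Lemma FI_c k t : continuity_pt (FI k) t.
Proof. destruct HsX as [ci [cv _]]. apply cont_lin3; auto. Qed.
Lemma FV_c k t : continuity_pt (FV k) t.
Proof. destruct HsX as [ci [cv _]]. apply cont_lin3; auto. Qed.

Lemma FI_d k t : INR k * h < t < INR (S k) * h -> derivable_pt_lim (FI k) t (I t).
Proof.
  intros Ht. destruct HsX as [_ [_ H]]. destruct (H k t Ht) as [di dv].
  eapply dlim_val; [|exact (dlim_lin3 _ _ t 0 (sg k * C) 0 _ _ dv di)].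
  unfold sg; destruct (Nat.even k); field; lra.
Qed.

Lemma FV_d k t : INR k * h < t < INR (S k) * h -> derivable_pt_lim (FV k) t (V t).
Proof.
  intros Ht. destruct HsX as [_ [_ H]]. destruct (H k t Ht) as [di dv].
  eapply dlim_val; [|exact (dlim_lin3 _ _ t (fk k * Vdc) (- (Rr * C)) (- (sg k * L)) _ _ dv di)].
  unfold sg, fk; destruct (Nat.even k); field; lra.
Qed.

Lemma HVg j : V (INR j * h) = Vdc / 2 + sg j * (Vp 0 - Vdc / 2) + evg j.
Proof. unfold evg. rewrite Vp_grid. ring. Qed.
Lemma HIg j : I (INR j * h) = Ip 0 + eig j.
Proof. unfold eig. rewrite Ip_grid. ring. Qed.

Lemma sumI n : gsum (gterm h FI) n =
  INR n * (C * (Vdc - 2 * Vp 0)) + C * gsum (fun k => sg k * (evg (S k) - evg k)) n.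
Proof.
  induction n.
  - simpl. ring.
  - simpl gsum. rewrite IHn. unfold gterm, FI. rewrite !HVg, sgS, S_INR.
    generalize (sg2 n); generalize (sg n); intros s Hs. set (G := gsum _ n). ring_simplify. replace (s ^ 2) with 1 by (rewrite <- Hs; ring). lra.
Qed.

Lemma sumFk n : gsum fk n = INR n / 2 + (1 - sg n) / 4.
Proof.
  induction n.
  - simpl. unfold sg; simpl. field.
  - simpl gsum. rewrite IHn, sgS, S_INR. unfold fk, sg; destruct (Nat.even n); field.
Qed.

Lemma sumV n : gsum (gterm h FV) n =
  Vdc * h * gsum fk n - Rr * C * (V (INR n * h) - V 0)
  - L * gsum (fun k => sg k * (eig (S k) - eig k)) n.
Proof.
  induction n.
  - simpl. replace (0 * h) with 0 by ring. ring.
  - simpl gsum. rewrite IHn. unfold gterm, FV. rewrite !HIg, S_INR. ring.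
Qed.

Lemma part_I n tau : INR n * h <= tau <= INR (S n) * h ->
  is_integral I 0 tau (gsum (gterm h FI) n + (FI n tau - FI n (INR n * h))).
Proof.
  apply part_int. apply Hh. apply HsX. apply FI_c. apply FI_d.
Qed.

Lemma part_V n tau : INR n * h <= tau <= INR (S n) * h ->
  is_integral V 0 tau (gsum (gterm h FV) n + (FV n tau - FV n (INR n * h))).
Proof.
  apply part_int. apply Hh. apply HsX. apply FV_c. apply FV_d.
Qed.

Lemma floor_h tau : 0 < tau -> exists n, INR n * h <= tau <= INR (S n) * h /\ INR n * h <= tau < INR (S n) * h.
Proof.
  intros Ht. destruct (floor_ex h tau Hh) as [n Hn]; [lra|]. exists n. split; lra.
Qed.

Lemma abs_diff_le a b B : Rabs a <= B -> Rabs b <= B -> Rabs (a - b) <= 2 * B.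
Proof. intros. unfold Rminus. eapply Rle_trans; [apply Rabs_triang|]. rewrite Rabs_Ropp. lra. Qed.

Lemma avgI : has_average I (C * (Vdc - 2 * Vp 0) / h).
Proof.
  apply avg_crit.
  - intros tau Ht. destruct (floor_h tau Ht) as [n [Hn _]]. eexists. apply part_I; eauto.
  - intros eta He.
    set (e' := eta * h / (4 * C)).
    assert (He' : 0 < e') by (unfold e'; apply Rdiv_lt_0_compat; [apply Rmult_lt_0_compat; lra| lra]).
    destruct (cesaro _ (evgS_small) e' He') as [K1 HK1].
    destruct (cesaro _ (evg_small) e' He') as [K2 HK2].
    destruct boundV as [B HB].
    set (D := Vdc - 2 * Vp 0).
    exists (C * Rabs D + C * (K1 + K2) + 2 * C * B).
    intros tau l Ht Hl. destruct (floor_h tau Ht) as [n [Hn Hn']].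
    assert (El := is_integral_unique _ _ _ _ _ Hl (part_I n tau Hn)).
    rewrite El, sumI. fold D. unfold FI.
    set (G := gsum (fun k => sg k * (evg (S k) - evg k)) n).
    assert (HG : Rabs G <= K1 + K2 + 2 * e' * INR n).
    { unfold G. eapply Rle_trans; [apply gsum_alt_bound|].
      specialize (HK1 n). specialize (HK2 n). lra. }
    assert (Hnh : INR n <= tau / h).
    { apply Rmult_le_reg_r with h; [apply Hh|]. replace (tau / h * h) with tau by (field; lra). lra. }
    assert (Hn0 : 0 <= INR n * h) by (apply Rmult_le_pos; [apply pos_INR|lra]).
    assert (HX1 : Rabs (C * D * (INR n - tau / h)) <= C * Rabs D).
    { rewrite !Rabs_mult, (Rabs_right C) by lra. rewrite <- (Rmult_1_r (C * Rabs D)) at 2.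
      apply Rmult_le_compat_l. apply Rmult_le_pos; [lra|apply Rabs_pos].
      apply Rabs_le. split.
      - assert (tau / h < INR n + 1).
        { apply Rmult_lt_reg_r with h; [apply Hh|]. replace (tau / h * h) with tau by (field; lra).
          rewrite S_INR in Hn'. lra. }
        lra.
      - lra. }
    assert (HX2 : Rabs (C * G) <= C * (K1 + K2) + eta * tau / 2).
    { rewrite Rabs_mult, (Rabs_right C) by lra.
      assert (C * (2 * e' * INR n) <= eta * tau / 2).
      { unfold e'. replace (C * (2 * (eta * h / (4 * C)) * INR n)) with (eta * h / 2 * INR n) by (field; lra).
        replace (eta * tau / 2) with (eta * h / 2 * (tau / h)) by (field; lra).
        apply Rmult_le_compat_l; [|lra]. left; apply Rdiv_lt_0_compat; [apply Rmult_lt_0_compat|]; lra. }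
      assert (C * Rabs G <= C * (K1 + K2 + 2 * e' * INR n)) by (apply Rmult_le_compat_l; lra).
      lra. }
    assert (HX3 : Rabs (sg n * C * (V tau - V (INR n * h))) <= 2 * C * B).
    { rewrite !Rabs_mult, Rabs_sg, (Rabs_right C) by lra.
      assert (Rabs (V tau - V (INR n * h)) <= 2 * B) by (apply abs_diff_le; apply HB; lra).
      nra. }
    match goal with |- Rabs ?X <= _ =>
      replace X with (C * D * (INR n - tau / h) + C * G + sg n * C * (V tau - V (INR n * h))) by (field; lra) end.
    eapply Rle_trans; [apply Rabs_triang|].
    assert (Rabs (C * D * (INR n - tau / h) + C * G) <= Rabs (C * D * (INR n - tau / h)) + Rabs (C * G)) by apply Rabs_triang.
    assert (0 <= eta * tau) by (apply Rmult_le_pos; lra).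
    lra.
Qed.

Lemma avgV : has_average V (Vdc / 2).
Proof.
  apply avg_crit.
  - intros tau Ht. destruct (floor_h tau Ht) as [n [Hn _]]. eexists. apply part_V; eauto.
  - intros eta He.
    set (e' := eta * h / (4 * L)).
    assert (He' : 0 < e') by (unfold e'; apply Rdiv_lt_0_compat; [apply Rmult_lt_0_compat; lra| lra]).
    destruct (cesaro _ (eigS_small) e' He') as [K1 HK1].
    destruct (cesaro _ (eig_small) e' He') as [K2 HK2].
    destruct boundV as [B HB]. destruct boundI as [BI HBI].
    exists (2 * Vdc * h + 2 * (Rr * C) * B + L * (K1 + K2) + 2 * L * BI).
    intros tau l Ht Hl. destruct (floor_h tau Ht) as [n [Hn Hn']].
    assert (El := is_integral_unique _ _ _ _ _ Hl (part_V n tau Hn)).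
    rewrite El, sumV, sumFk. unfold FV.
    set (G := gsum (fun k => sg k * (eig (S k) - eig k)) n).
    assert (HG : Rabs G <= K1 + K2 + 2 * e' * INR n).
    { unfold G. eapply Rle_trans; [apply gsum_alt_bound|].
      specialize (HK1 n). specialize (HK2 n). lra. }
    assert (Hnh : INR n <= tau / h).
    { apply Rmult_le_reg_r with h; [apply Hh|]. replace (tau / h * h) with tau by (field; lra). lra. }
    assert (Hn0 : 0 <= INR n * h) by (apply Rmult_le_pos; [apply pos_INR|lra]).
    set (w := tau - INR n * h).
    assert (Hw : 0 <= w <= h) by (unfold w; rewrite S_INR in Hn; lra).
    set (Y := Vdc / 2 * (- w) + Vdc * h * (1 - sg n) / 4 + fk n * Vdc * w).
    assert (HY : Rabs Y <= 2 * Vdc * h).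
    { unfold Y, sg, fk. apply Rabs_le. destruct (Nat.even n); split; nra. }
    assert (HX4 : Rabs (Rr * C * (V tau - V 0)) <= 2 * (Rr * C) * B).
    { rewrite Rabs_mult, (Rabs_right (Rr * C)) by (apply Rle_ge, Rmult_le_pos; lra).
      assert (Rabs (V tau - V 0) <= 2 * B) by (apply abs_diff_le; apply HB; lra).
      assert (0 < Rr * C) by (apply Rmult_lt_0_compat; lra). nra. }
    assert (HX5 : Rabs (L * G) <= L * (K1 + K2) + eta * tau / 2).
    { rewrite Rabs_mult, (Rabs_right L) by lra.
      assert (L * (2 * e' * INR n) <= eta * tau / 2).
      { unfold e'. replace (L * (2 * (eta * h / (4 * L)) * INR n)) with (eta * h / 2 * INR n) by (field; lra).
        replace (eta * tau / 2) with (eta * h / 2 * (tau / h)) by (field; lra).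
        apply Rmult_le_compat_l; [|lra]. left; apply Rdiv_lt_0_compat; [apply Rmult_lt_0_compat|]; lra. }
      assert (L * Rabs G <= L * (K1 + K2 + 2 * e' * INR n)) by (apply Rmult_le_compat_l; lra).
      lra. }
    assert (HX6 : Rabs (sg n * L * (I tau - I (INR n * h))) <= 2 * L * BI).
    { rewrite !Rabs_mult, Rabs_sg, (Rabs_right L) by lra.
      assert (Rabs (I tau - I (INR n * h)) <= 2 * BI) by (apply abs_diff_le; apply HBI; lra).
      nra. }
    match goal with |- Rabs ?X <= _ =>
      replace X with (Y - Rr * C * (V tau - V 0) - L * G - sg n * L * (I tau - I (INR n * h)))
        by (unfold Y, w; field; lra) end.
    unfold Rminus at 1 2 3.
    eapply Rle_trans; [apply Rabs_triang|]. rewrite Rabs_Ropp.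
    eapply Rle_trans; [apply Rplus_le_compat_r; apply Rabs_triang|]. rewrite Rabs_Ropp.
    eapply Rle_trans; [apply Rplus_le_compat_r; apply Rplus_le_compat_r; apply Rabs_triang|]. rewrite Rabs_Ropp.
    assert (0 <= eta * tau) by (apply Rmult_le_pos; lra).
    lra.
Qed.

Lemma sym0 : Ip h = Ip 0 /\ Vp 0 + Vp h = Vdc.
Proof.
  destruct (sym 0) as [H1 H2]. simpl in H1, H2.
  replace (1 * h) with h in * by ring. replace (0 * h) with 0 in * by ring. auto.
Qed.

Lemma final_part : exists t0, 0 <= t0 <= h /\ (forall t, 0 <= t <= h -> Rabs (Ip t) <= Rabs (Ip t0)) /\
  Rabs (2 * C / T * (Vdc - 2 * Vp 0) - Vdc / (2 * Rr)) <= T / (2 * Rr * C) * Rabs (Ip t0).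
Proof.
  destruct HsP as [ci [cv Hd]].
  destruct (continuity_ab_maj (fun t => Rabs (Ip t)) 0 h) as [t0 [Ht0' Ht0]]; [lra| |].
  { intros c _. apply (continuity_pt_comp Ip Rabs); auto. apply Rcontinuity_abs. }
  exists t0. split; auto. split; auto.
  set (M := Rabs (Ip t0)).
  assert (HM0 : 0 <= M) by apply Rabs_pos.
  assert (Hd0 : forall t, 0 < t < h -> derivable_pt_lim Ip t (- (Rr / L) * Ip t - 1 * (1 / L) * Vp t + 1 * (Vdc / L))
                 /\ derivable_pt_lim Vp t (1 * (1 / C) * Ip t)).
  { intros t Ht. assert (Ht' : INR 0 * h < t < INR 1 * h) by (simpl; lra). exact (Hd 0%nat t Ht'). }
  assert (Hdv : forall x, 0 < x < h -> Rabs (1 * (1 / C) * Ip x) <= M / C).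
  { intros x Hx. rewrite !Rabs_mult, Rabs_R1, (Rabs_right (1 / C)) by (apply Rle_ge; left; apply Rdiv_lt_0_compat; lra).
    assert (Rabs (Ip x) <= M) by (apply Ht0'; lra).
    unfold Rdiv. assert (0 < / C) by (apply Rinv_0_lt_compat; lra). nra. }
  destruct sym0 as [S1 S2].
  assert (HMC : 0 <= M / C) by (unfold Rdiv; apply Rmult_le_pos; [lra|left; apply Rinv_0_lt_compat; lra]).
  assert (HVb : forall t, 0 < t < h -> Rabs (Vp t - Vdc / 2) <= M / C * h / 2).
  { intros t Ht.
    assert (A1 : Rabs (Vp t - Vp 0) <= M / C * (t - 0)).
    { apply (mvt_abs Vp (fun x => 1 * (1 / C) * Ip x)); try lra; auto.
      - intros x Hx. apply Hd0. lra.
      - intros x Hx. apply Hdv. lra. }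
    assert (A2 : Rabs (Vp h - Vp t) <= M / C * (h - t)).
    { apply (mvt_abs Vp (fun x => 1 * (1 / C) * Ip x)); try lra; auto.
      - intros x Hx. apply Hd0. lra.
      - intros x Hx. apply Hdv. lra. }
    replace (Vp t - Vdc / 2) with (((Vp t - Vp 0) - (Vp h - Vp t)) / 2) by lra.
    unfold Rdiv at 1. rewrite Rabs_mult, (Rabs_right (/ 2)) by lra.
    assert (Rabs (Vp t - Vp 0 - (Vp h - Vp t)) <= M / C * h).
    { unfold Rminus at 1. eapply Rle_trans; [apply Rabs_triang|]. rewrite Rabs_Ropp.
      replace (M / C * h) with (M / C * (t - 0) + M / C * (h - t)) by ring. lra. }
    lra. }
  set (Phi := fun t => Vdc / 2 * t + (- (Rr * C)) * Vp t + (- L) * Ip t).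
  assert (HPhi : Rabs (Phi h - Phi 0) <= M / C * h / 2 * (h - 0)).
  { apply (mvt_abs Phi (fun t => Vp t - Vdc / 2)); try lra.
    - intros x _. unfold Phi. apply cont_lin3; auto.
    - intros x Hx. destruct (Hd0 x Hx) as [di dv].
      eapply dlim_val; [|exact (dlim_lin3 _ _ x (Vdc / 2) (- (Rr * C)) (- L) _ _ dv di)].
      field; lra.
    - exact HVb. }
  assert (EPhi : Phi h - Phi 0 = Vdc * h / 2 - Rr * C * (Vdc - 2 * Vp 0)).
  { unfold Phi. rewrite S1. replace (Vp h) with (Vdc - Vp 0) by lra. field. }
  replace (2 * C / T * (Vdc - 2 * Vp 0) - Vdc / (2 * Rr)) with (- (Phi h - Phi 0) * / (Rr * h))
    by (rewrite EPhi; field; lra).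
  rewrite Rabs_mult, Rabs_Ropp, (Rabs_right (/ (Rr * h))) by (apply Rle_ge; left; apply Rinv_0_lt_compat; apply Rmult_lt_0_compat; lra).
  apply Rle_trans with (M / C * h / 2 * (h - 0) * / (Rr * h)).
  { apply Rmult_le_compat_r; [left; apply Rinv_0_lt_compat; apply Rmult_lt_0_compat; lra| exact HPhi]. }
  replace (M / C * h / 2 * (h - 0) * / (Rr * h)) with (T / (2 * Rr * C) * M / 2) by (field; lra).
  assert (0 <= T / (2 * Rr * C) * M).
  { apply Rmult_le_pos; auto. left; apply Rdiv_lt_0_compat; [lra| repeat apply Rmult_lt_0_compat; lra]. }
  lra.
Qed.

End Main.

Theorem theorem2 (Rr L C Vdc T : R) (i v ip vp : R -> R) :
  0 < Rr -> 0 < L -> 0 < C -> 0 < Vdc -> 0 < T ->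
  is_solution Rr L C Vdc T i v ->
  is_periodic_solution Rr L C Vdc T ip vp ->
  has_average v ((vp 0 + vp (T / 2)) / 2) /\
  (vp 0 + vp (T / 2)) / 2 = Vdc / 2 /\
  has_average i (2 * C / T * (Vdc - 2 * vp 0)) /\
  (exists t0, 0 <= t0 <= T / 2 /\
     (forall t, 0 <= t <= T / 2 -> Rabs (ip t) <= Rabs (ip t0)) /\
     Rabs (2 * C / T * (Vdc - 2 * vp 0) - Vdc / (2 * Rr))
       <= T / (2 * Rr * C) * Rabs (ip t0)).
Proof.
  intros HR HL HC HV HT Hs Hp.
  destruct (sym0 Rr L C Vdc T ip vp HR HL HC HT Hp) as [S1 S2].
  rewrite !clamp_pos in S1, S2 by lra.
  assert (Hvp : (vp 0 + vp (T / 2)) / 2 = Vdc / 2) by lra.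
  assert (Hc0 : clamp vp 0 = vp 0) by (apply clamp_pos; lra).
  split; [rewrite Hvp; apply avg_clamp; exact (avgV Rr L C Vdc T i v ip vp HR HL HC HV HT Hs Hp)|].
  split; [exact Hvp|].
  split.
  - apply avg_clamp. replace (2 * C / T * (Vdc - 2 * vp 0)) with (C * (Vdc - 2 * clamp vp 0) / (T / 2))
      by (rewrite Hc0; field; lra).
    exact (avgI Rr L C Vdc T i v ip vp HR HL HC HT Hs Hp).
  - destruct (final_part Rr L C Vdc T ip vp HR HL HC HT Hp) as [t0 [Ht0 [H1 H2]]].
    exists t0. rewrite Hc0, clamp_pos in H2 by lra. split; auto. split; auto.
    intros t Ht. specialize (H1 t Ht). rewrite !clamp_pos in H1 by lra. auto.
Qed.
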